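(* Let $G$ be a finite group, $p$ a prime, and $n>0$ an integer with $\gcd(n,p)=1$. Then $\mathrm{Pow}(G)\cong \mathrm{Pow}(\mathbb{Z}_p\times\mathbb{Z}_p\times\mathbb{Z}_n)$ if and only if $G\cong \mathbb{Z}_p\times\mathbb{Z}_p\times\mathbb{Z}_n$.
   Context: All groups are finite. $\mathbb{Z}_k$ denotes the cyclic group of order $k$. For a group $X$, the power graph $\mathrm{Pow}(X)$ is the simple graph with vertex set $X$ in which two distinct vertices $x,y$ are adjacent if and only if $y\in\langle x\rangle$ or $x\in\langle y\rangle$. *)

(* Defs.v *)
From mathcomp Require Import all_boot all_fingroup all_algebra all_solvable.
Set Implicit Arguments. Unset Strict Implicit. Unset Printing Implicit Defensive.

Local Open Scope group_scope.

Definition pow_adj (gT : finGroupType) (x y : gT) : bool :=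
  (x != y) && ((y \in <[x]>) || (x \in <[y]>)).

Definition pow_graph_iso (gT hT : finGroupType) : Prop :=
  exists f : gT -> hT, bijective f /\ forall x y, pow_adj (f x) (f y) = pow_adj x y.

(* The cyclic group Z_k for k > 0, realised as 'I_k (additive group mod k). *)
Definition Zmod (k : nat) : finGroupType := 'I_k.-1.+1.

Definition ZppZn (p n : nat) : finGroupType := (Zmod p * Zmod p * Zmod n)%type.

(* Main.v *)
Require Import Defs.
From mathcomp Require Import all_boot all_fingroup all_algebra all_solvable.
Set Implicit Arguments. Unset Strict Implicit. Unset Printing Implicit Defensive.


Lemma phi_mulq a q : prime q -> 0 < a ->
  totient (a * q) = (if q %| a then q * totient a else q.-1 * totient a)%N.
Proof.
move=> qp a0; case: ifP => qa; last first.
  rewrite totient_coprime; first by rewrite (totient_prime qp) mulnC.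
  by rewrite coprime_sym prime_coprime // qa.
have q0 := prime_gt0 qp.
rewrite -{1 2}(partnC q a0) p_part.
set k := logn q a; set r := (a`_q^')%N.
have k0 : 0 < k by rewrite /k lognE qp a0 qa.
have cqr : coprime q r.
  have := coprime_partC q a a; rewrite p_part -/k -/r coprime_pexpl //.
rewrite mulnAC -expnSr !totient_coprime ?coprimeXl //.
rewrite !totient_pfactor // mulnA; congr (_ * _)%N.
by rewrite /= mulnCA -expnS prednK.
Qed.

Lemma phi_mono_aux k : forall a, 0 < a -> 1 < k ->
  totient a <= totient (a * k) /\
  (totient a = totient (a * k) -> k = 2 /\ odd a).
Proof.
elim/ltn_ind: k => k IH a a0 k1.
have k0 : 0 < k by apply: ltnW.
set q := pdiv k; have qp : prime q by apply: pdiv_prime.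
have qk : q %| k by apply: pdiv_dvd.
have q1 := prime_gt1 qp.
have ta0 : 0 < totient a by rewrite totient_gt0.
have step : totient a <= totient (a * q) /\
            (totient a = totient (a * q) -> q = 2 /\ odd a).
  rewrite phi_mulq //; case: ifP => qa.
    split; first by apply: leq_pmull; apply: prime_gt0.
    move=> /esym /eqP; rewrite -{2}[totient a]mul1n eqn_pmul2r // => /eqP q1'.
    by rewrite q1' in q1.
  split; first by rewrite leq_pmull // -ltnS prednK ?prime_gt0.
  move=> /esym /eqP; rewrite -{2}[totient a]mul1n eqn_pmul2r // => /eqP qe.
  have q2 : q = 2 by rewrite -(prednK (prime_gt0 qp)) qe.
  by split=> //; move: qa; rewrite q2 dvdn2 => /negbT; rewrite negbK.
have [k' def_k] : exists k', k = (q * k')%N.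
  by exists (k %/ q); rewrite mulnC divnK.
have k'0 : 0 < k' by move: k0; rewrite def_k muln_gt0 => /andP[].
case: (ltnP 1 k') => [k'1 | k'le1].
  have k'lt : k' < k by rewrite def_k ltn_Pmull.
  have aq0 : 0 < a * q by rewrite muln_gt0 a0 prime_gt0.
  have [le2 eq2] := IH k' k'lt (a * q) aq0 k'1.
  rewrite def_k mulnA; split; first exact: leq_trans (proj1 step) le2.
  move=> e.
  have e1 : totient a = totient (a * q).
    apply/eqP; rewrite eqn_leq (proj1 step) /= e le2 //.
  have [q2 _] := (proj2 step) e1.
  have [_ oddaq] := eq2 (etrans (esym e1) e).
  by move: oddaq; rewrite q2 oddM /= andbF.
have k'1 : k' = 1%N by apply/eqP; rewrite eqn_leq k'le1 k'0.
by rewrite def_k k'1 muln1.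
Qed.

Lemma phi_dvd_le a b : 0 < b -> a %| b -> totient a <= totient b.
Proof.
move=> b0 /dvdnP[k def_b].
have a0 : 0 < a by move: b0; rewrite def_b muln_gt0 => /andP[].
have k0 : 0 < k by move: b0; rewrite def_b muln_gt0 => /andP[].
case: (ltnP 1 k) => [k1 | ]; first by rewrite def_b mulnC; case: (phi_mono_aux a0 k1).
move=> k1; rewrite def_b; have -> : k = 1%N by apply/eqP; rewrite eqn_leq k1 k0.
by rewrite mul1n.

Qed.

Lemma phi_dvd_eq a b : 0 < b -> a %| b -> a != b ->
  totient a = totient b -> b = (2 * a)%N /\ odd a.
Proof.
move=> b0 /dvdnP[k def_b] ab e.
have a0 : 0 < a by move: b0; rewrite def_b muln_gt0 => /andP[].
have k0 : 0 < k by move: b0; rewrite def_b muln_gt0 => /andP[].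
case: (ltnP 1 k) => [k1 | k1].
  have [_ h] := phi_mono_aux a0 k1; rewrite def_b mulnC in e.
  by have [k2 oa] := h e; rewrite def_b k2 mulnC.
have k1' : k = 1%N by apply/eqP; rewrite eqn_leq k1 k0.
by move: ab; rewrite def_b k1' mul1n eqxx.
Qed.

Local Open Scope group_scope.

Section Generic.
Variable T : finGroupType.
Implicit Types x y a b w v : T.

Definition cmp x y := (y \in <[x]>) || (x \in <[y]>).
Definition Nb x := [set y | cmp x y].
Definition Tw x := [set w | Nb w == Nb x].

Lemma cmpC x y : cmp x y = cmp y x.
Proof. by rewrite /cmp orbC. Qed.

Lemma cmpxx x : cmp x x.
Proof. by rewrite /cmp cycle_id. Qed.

Lemma inNb x y : (y \in Nb x) = cmp x y.
Proof. by rewrite inE. Qed.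

Lemma mem_cyc_dvd x a b : a \in <[x]> -> b \in <[x]> ->
  (a \in <[b]>) = (#[a] %| #[b])%N.
Proof.
move=> ax bx; rewrite -cycle_subG (cardSg_cyclic (cycle_cyclic x)) //;
  by rewrite cycle_subG.
Qed.

Lemma gen_Tw x w : <[x]> = <[w]> -> w \in Tw x.
Proof.
move=> exw; rewrite inE; apply/eqP/setP=> v; rewrite !inNb /cmp.
rewrite exw; congr (_ || _); by rewrite -!cycle_subG exw.
Qed.

Lemma Tw_refl x : x \in Tw x.
Proof. by rewrite inE. Qed.

Lemma Tw_cmp x w : w \in Tw x -> cmp x w.
Proof. by rewrite inE => /eqP e; rewrite -inNb -e inNb cmpxx. Qed.

Lemma phi_le_Tw x : totient #[x] <= #|Tw x|.
Proof.
rewrite totient_gen; apply: subset_leq_card; apply/subsetP=> w.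
by rewrite inE /generator => /eqP e; apply: gen_Tw.
Qed.

Lemma Nb1 : Nb 1 = setT.
Proof. by apply/setP=> v; rewrite !inE /cmp group1 orbT. Qed.

Lemma order_x_div x e : (e %| #[x])%N -> #[x ^+ (#[x] %/ e)] = e.
Proof.
move=> /dvdnP[k def]; have o0 := order_gt0 x.
have e0 : 0 < e by move: o0; rewrite def muln_gt0 => /andP[].
rewrite orderXdiv def ?mulnK ?mulKn //; last by rewrite dvdn_mulr.
by move: o0; rewrite def muln_gt0 => /andP[].
Qed.

Lemma pp_lemma x w : w \in <[x]> -> w != 1 -> <[w]> != <[x]> ->
  (forall v, v \in <[x]> -> cmp w v) ->
  exists2 q, prime q & exists2 r, 1 < r & #[x] = (q ^ r)%N.
Proof.
move=> wx w1 wnx allc.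
set m := #[x]; set d := #[w].
have m0 : 0 < m by apply: order_gt0.
have dm : (d %| m)%N by apply: order_dvdG.
have d1 : 1 < d.
  rewrite ltn_neqAle order_gt0 andbT eq_sym; apply: contra w1.
  by rewrite order_eq1.
have dltm : d < m.
  rewrite ltn_neqAle (dvdn_leq m0 dm) andbT; apply: contra wnx => /eqP e.
  by rewrite eqEcard cycle_subG wx /=; move: e; rewrite /d /m /order => ->.
have key : forall e, (e %| m)%N -> (d %| e)%N || (e %| d)%N.
  move=> e em; have := allc _ (mem_cycle x (m %/ e)).
  have vx : x ^+ (m %/ e) \in <[x]> by apply: mem_cycle.
  rewrite /cmp (mem_cyc_dvd wx vx) (mem_cyc_dvd vx wx) order_x_div //.
  by rewrite orbC.
set q := pdiv d.
have qp : prime q by apply: pdiv_prime.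
have qd : (q %| d)%N by apply: pdiv_dvd; apply: ltnW.
set e2 := (m`_q^')%N; set e1 := (m`_q)%N.
have ce : coprime e1 e2 by apply: coprime_partC.
have e2d : (e2 %| d)%N.
  have := key e2 (dvdn_part _ _); case/orP=> // de2.
  have := part_pnat q^' m; rewrite -/e2 p'natE // => /negP[].
  exact: dvdn_trans qd de2.
have de1 : (d %| e1)%N.
  have := key e1 (dvdn_part _ _); case/orP=> // e1d.
  have : (m %| d)%N by rewrite -(partnC q m0) -/e1 -/e2 Gauss_dvd // e1d e2d.
  by move=> /(dvdn_leq (ltnW d1)); rewrite leqNgt dltm.
have e21 : e2 = 1%N.
  have := coprime_dvdl (dvdn_trans e2d de1) ce.
  by rewrite /coprime gcdnn => /eqP.
have [r mE] : exists r, m = (q ^ r)%N.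
  exists (logn q m).
  by rewrite -p_part -/e1 -{1}(partnC q m0) -/e1 -/e2 e21 muln1.
exists q => //; exists r; last exact: mE.
move: dm dltm d1; rewrite mE; case/(dvdn_pfactor _ _ qp) => s sr ->.
rewrite (ltn_exp2l _ _ (prime_gt1 qp)) => sr'.
case: s sr sr' => [|s] sr sr'; first by rewrite expn0.
by move=> _; apply: leq_ltn_trans sr'.
Qed.

Lemma qgroup_cmp x q r : prime q -> #[x] = (q ^ r)%N ->
  forall a b, a \in <[x]> -> b \in <[x]> -> cmp a b.
Proof.
move=> qp ox a b ax bx.
have := order_dvdG ax; have := order_dvdG bx; rewrite -/(#[x]) ox.
case/(dvdn_pfactor _ _ qp) => j _ ob; case/(dvdn_pfactor _ _ qp) => i _ oa.
rewrite /cmp (mem_cyc_dvd bx ax) (mem_cyc_dvd ax bx) oa ob.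
case/orP: (leq_total i j) => hij; first by rewrite (dvdn_exp2l q hij) orbT.
by rewrite (dvdn_exp2l q hij).
Qed.

End Generic.


Lemma cop_dvd1 a b : coprime a b -> (a %| b)%N -> a = 1%N.
Proof.
move=> cab ab; have := coprime_dvdr ab cab.
by rewrite /coprime gcdnn => /eqP.
Qed.

Lemma cmp_trans_cyc (T : finGroupType) (x z v : T) :
  x \in <[z]> -> v \in <[x]> -> v \in <[z]>.
Proof. by move=> xz vx; apply: subsetP vx; rewrite cycle_subG. Qed.

Section Transfer.
Variables gT hT : finGroupType.
Variable h : hT -> gT.
Variable f : gT -> hT.
Hypothesis hf : cancel h f.
Hypothesis fh : cancel f h.
Hypothesis hcmp : forall u v, cmp (h u) (h v) = cmp u v.

Lemma hinj : injective h. Proof. exact: can_inj hf. Qed.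

Lemma NbH u : Nb (h u) = h @: Nb u.
Proof.
apply/setP=> z; rewrite -[z]fh mem_imset; last exact: hinj.
by rewrite !inNb hcmp.
Qed.

Lemma TwH u : Tw (h u) = h @: Tw u.
Proof.
apply/setP=> z; rewrite -[z]fh mem_imset; last exact: hinj.
by rewrite !inE !NbH (inj_eq (imset_inj hinj)).
Qed.

Lemma card_TwH u : #|Tw (h u)| = #|Tw u|.
Proof. by rewrite TwH card_imset //; apply: hinj. Qed.

Lemma card_gT : #|gT| = #|hT|.
Proof. by apply/esym/bij_eq_card; exists f. Qed.

Lemma card_Tw_HT (HT : forall u v : hT, Nb u = Nb v -> <[u]> = <[v]>) (u : hT) :
  #|Tw u| = totient #[u].
Proof.
apply/eqP; rewrite eqn_leq phi_le_Tw andbT totient_gen; apply: subset_leq_card.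
apply/subsetP=> w; rewrite !inE => /eqP e.
by rewrite /generator (HT _ _ e).
Qed.

Lemma gsl (y : hT) (a b : nat) :
  Nb y = <[y]> -> #|<[y]>| < #|hT| ->
  ((forall u, u \in <[y]> -> u = 1 \/ <[u]> = <[y]>) \/
   [/\ (forall u v : hT, Nb u = Nb v -> <[u]> = <[v]>), #[y] = (a * b)%N,
       coprime a b, 1 < a & 1 < b]) ->
  exists x : gT, h @: <[y]> = <[x]>.
Proof.
move=> Nby cardy hyp.
set X := Tw (h y).
have hyX : h y \in X by apply: Tw_refl.
case: (arg_maxnP (fun w => #[w]) hyX) => x xX xmax.
have NbX : forall w, w \in X -> Nb w = Nb (h y) by move=> w; rewrite inE => /eqP.
have NbxE : Nb x = h @: <[y]> by rewrite NbX // NbH Nby.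
have TwxE : Tw x = X by apply/setP=> w; rewrite !inE (NbX x xX).
have F2 : forall w, w \in X -> w \in <[x]>.
  move=> w wX; have : cmp x w by apply: Tw_cmp; rewrite TwxE.
  case/orP => // xw.
  have oxw : (#[x] %| #[w])%N by apply: order_dvdG.
  have e : #[w] = #[x].
    by apply/eqP; rewrite eqn_leq (xmax w wX : #[w] <= #[x]) (dvdn_leq (order_gt0 _) oxw).
  have ex : <[x]> = <[w]>.
    by apply/eqP; rewrite eqEcard cycle_subG xw /=; move: e; rewrite /order => ->.
  by rewrite ex cycle_id.
have F3 : 1 \notin X.
  apply/negP => oneX; have := NbX _ oneX; rewrite Nb1 NbH Nby => e.
  move: cardy; rewrite -card_gT -cardsT e card_imset ?ltnn //; exact: hinj.
suffices sub : Nb x \subset <[x]>.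
  exists x; rewrite -NbxE; apply/eqP; rewrite eqEsubset sub /=.
  by apply/subsetP => v vx; rewrite inNb /cmp vx.
have inNbx : forall u, u \in <[y]> -> h u \in Nb x.
  by move=> u uy; rewrite NbxE imset_f.
case: hyp => [allu | [HT oy cab a1 b1]].
  apply/subsetP => z; rewrite NbxE => /imsetP[u uy ->].
  case: (allu u uy) => [u1 | eu]; last first.
    apply: F2; rewrite /X TwH imset_f //; apply: gen_Tw; exact: esym.
  have : 1 \in Nb x by rewrite inNb /cmp group1.
  rewrite NbxE => /imsetP[u0 u0y e0].
  case: (allu u0 u0y) => [u01 | eu0].
    by rewrite u1 -u01 -e0 group1.
  case/negP: F3; rewrite e0 /X TwH imset_f //; apply: gen_Tw; exact: esym.
have cardTw := card_Tw_HT HT.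
have b0 : 0 < b by apply: ltnW.
have a0 : 0 < a by apply: ltnW.
have ab0 : 0 < a * b by rewrite muln_gt0 a0.
have ab4 : 4 <= a * b by apply: (@leq_mul 2 2).
have XE : #|X| = totient (a * b) by rewrite card_TwH cardTw oy.
have Xsub : X \subset <[x]> by apply/subsetP => w; apply: F2.
have Xlt : #|X| < #[x].
  apply: proper_card; apply/properP; split=> //.
  by exists 1; rewrite ?group1.
have bound : forall u, x \in <[h u]> -> totient #[x] <= totient #[u].
  move=> u xu; apply: leq_trans (phi_dvd_le (order_gt0 _) (order_dvdG xu)) _.
  by rewrite -(cardTw u) -(card_TwH u); apply: phi_le_Tw.
have Xgen : forall w, w \in X -> <[w]> = <[x]>.
  move=> w wX; apply/eqP/negPn/negP => wnx.
  have wx := F2 w wX.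
  have w1 : w != 1 by apply: contraNneq F3 => <-.
  have allc : forall v, v \in <[x]> -> cmp w v.
    by move=> v vx; rewrite -inNb (NbX w wX) -(NbX x xX) inNb /cmp vx.
  have [q qp [r r1 oxq]] := pp_lemma wx w1 wnx allc.
  have qc := qgroup_cmp qp oxq.
  pose al := y ^+ b; pose be := y ^+ a.
  have aly : al \in <[y]> by apply: mem_cycle.
  have bey : be \in <[y]> by apply: mem_cycle.
  have oal : #[al] = a by rewrite orderXdiv oy ?dvdn_mull // mulnK.
  have obe : #[be] = b by rewrite orderXdiv oy ?dvdn_mulr // mulKn.
  have ncab : ~~ cmp al be.
    rewrite /cmp (mem_cyc_dvd bey aly) (mem_cyc_dvd aly bey) obe oal.
    apply/norP; split; apply/negP => d.
      by move: b1; rewrite (cop_dvd1 _ d) // coprime_sym.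
    by move: a1; rewrite (cop_dvd1 cab d).
  have up : forall u v, u \in <[y]> -> v \in <[y]> -> ~~ cmp u v ->
      x \in <[h u]>.
    move=> u v uy vy nuv.
    have := inNbx u uy; rewrite inNb /cmp; case/orP => // hux.
    have := inNbx v vy; rewrite inNb /cmp; case/orP => hvx; case/negP: nuv.
      by rewrite -hcmp; apply: qc.
    by rewrite -hcmp /cmp (cmp_trans_cyc hvx hux) orbT.
  have xal := up al be aly bey ncab.
  have xbe := up be al bey aly (ltac:(by rewrite cmpC)).
  have := bound al xal; have := bound be xbe; rewrite oal obe oxq.
  move: Xlt; rewrite XE totient_coprime // oxq => Xlt le1 le2.
  have r0 : 0 < r by apply: ltnW.
  have q0 : 0 < q by apply: prime_gt0.
  have tq : q ^ r.-1 <= totient (q ^ r).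
    by rewrite totient_pfactor // leq_pmull // -ltnS prednK // prime_gt1.
  have : q ^ r <= q ^ r.-1 * q ^ r.-1.
    rewrite -expnD leq_pexp2l //; case: r r1 {tq r0 oxq le1 le2 Xlt} => // r.
    by rewrite /= => r1; rewrite -{1}[r]addn0 ltn_add2l.
  move=> h1; have : q ^ r < q ^ r.
    apply: leq_ltn_trans h1 _; apply: leq_ltn_trans Xlt.
    by apply: leq_mul; apply: leq_trans tq _.
  by rewrite ltnn.
have phix : totient #[x] = totient (a * b).
  apply/eqP; rewrite eqn_leq -XE -{1}TwxE phi_le_Tw /= totient_gen.
  apply: subset_leq_card; apply/subsetP => w wX.
  by rewrite inE /generator (Xgen w wX).
apply/subsetP => z; rewrite inNb /cmp; case/orP => // xz.
case zX: (z \in X); first exact: F2.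
apply/negPn/negP => nzx.
pose u := f z.
have zE : z = h u by rewrite /u fh.
have uy : u \in <[y]>.
  have : z \in Nb x by rewrite inNb /cmp xz orbT.
  by rewrite NbxE zE mem_imset //; apply: hinj.
have unTw : u \notin Tw y.
  by rewrite -(mem_imset _ _ hinj) -TwH -zE zX.
have ouab : (#[u] %| a * b)%N by rewrite -oy; apply: order_dvdG.
have le1 : totient (a * b) <= totient #[u].
  rewrite -phix; apply: leq_trans (phi_dvd_le (order_gt0 z) (order_dvdG xz)) _.
  by rewrite -(cardTw u) -card_TwH -zE; apply: phi_le_Tw.
have le2 : totient #[u] <= totient (a * b) := phi_dvd_le ab0 ouab.
have une : #[u] != (a * b)%N.
  apply: contra unTw => /eqP e; apply: gen_Tw; apply/eqP.
  rewrite eq_sym eqEcard cycle_subG uy /=.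
  by move: e; rewrite -oy /order => ->.
have [ab2 oddu] : (a * b)%N = (2 * #[u])%N /\ odd #[u].
  by apply: phi_dvd_eq => //; apply/eqP; rewrite eqn_leq le2 le1.
pose t := y ^+ #[u].
have ty : t \in <[y]> by apply: mem_cycle.
have ot : #[t] = 2.
  by rewrite orderXdiv oy // ab2 mulnK // order_gt0.
have nut : ~~ cmp u t.
  rewrite /cmp (mem_cyc_dvd ty uy) (mem_cyc_dvd uy ty) ot dvdn2 oddu /=.
  apply/negP => /(dvdn_leq (isT : 0 < 2)); rewrite leq_eqVlt ltnS.
  case/orP => [/eqP u2 | u1]; first by move: oddu; rewrite u2.
  have u1' : #[u] = 1%N by apply/eqP; rewrite eqn_leq u1 order_gt0.
  by move: ab4; rewrite ab2 u1'.
have nzt : ~~ cmp z (h t) by rewrite zE hcmp.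
have := inNbx t ty; rewrite inNb /cmp; case/orP => [htx | xht].
  by case/negP: nzt; rewrite /cmp (cmp_trans_cyc xz htx).
have := bound t xht; rewrite ot phix (totient_prime (isT : prime 2)) /=.
by rewrite leqNgt totient_gt1 (leq_trans _ ab4).
Qed.


End Transfer.


Lemma mulpE (g1 g2 : finGroupType) (u v : g1 * g2) :
  u * v = (u.1 * v.1, u.2 * v.2).
Proof. by []. Qed.

Lemma exppE (g1 g2 : finGroupType) (u : g1 * g2) k :
  u ^+ k = (u.1 ^+ k, u.2 ^+ k).
Proof.
elim: k => [|k IH]; first by [].
by rewrite !expgS mulpE IH.
Qed.

Lemma onepE (g1 g2 : finGroupType) : (1 : g1 * g2) = (1, 1).
Proof. by []. Qed.

Lemma card_Zmod k : 0 < k -> #|Zmod k| = k.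
Proof. by move=> k0; rewrite card_ord prednK. Qed.

Lemma expZmod k (z : Zmod k) : 0 < k -> z ^+ k = 1.
Proof. by move=> k0; have := expg_cardG (in_setT z); rewrite cardsT card_Zmod. Qed.

Lemma commZ k (a b : Zmod k) : commute a b.
Proof. exact: Zp_mulgC. Qed.

Lemma order_Zmod1 k : 0 < k -> #[(Zp1 : Zmod k)] = k.
Proof. by move=> k0; rewrite order_Zp1 prednK. Qed.

Lemma cycle_Zmod1 k : <[(Zp1 : Zmod k)]> = setT.
Proof. by rewrite -Zp_cycle. Qed.

Section HSide.
Variables p n : nat.
Hypotheses (pp : prime p) (n0 : 0 < n) (cnp : coprime n p).
Local Notation E0 := (Zmod p * Zmod p)%type.
Local Notation HH := (ZppZn p n).

Lemma p0 : 0 < p. Proof. exact: prime_gt0. Qed.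

Lemma expE0 (e : E0) : e ^+ p = 1.
Proof. by rewrite exppE !expZmod // p0. Qed.

Lemma expHH (u : HH) : u ^+ (p * n) = 1.
Proof.
rewrite exppE expgM expE0 expg1n mulnC expgM expZmod //.
by rewrite expg1n.
Qed.

Lemma comm_HH (u v : HH) : commute u v.
Proof.
case: u => [[a b] c]; case: v => [[a' b'] c'].
by rewrite /commute !mulpE /= (commZ a) (commZ b) (commZ c).
Qed.

Lemma order_E0 (e : E0) : e != 1 -> #[e] = p.
Proof. by move=> e1; apply: nt_prime_order => //; apply: expE0. Qed.

Lemma order_dvd_HH (u : HH) : (#[u] %| p * n)%N.
Proof. by rewrite order_dvdn expHH. Qed.

Definition Eset : {set HH} := setX [set: E0] 1.

Lemma Eset_exp u : u \in Eset -> u ^+ p = 1.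
Proof.
case: u => e c; rewrite in_setX => /andP[_]; rewrite inE => /eqP ->.
by rewrite exppE /= expE0 expg1n.
Qed.

Lemma card_Eset : #|Eset| = (p * p)%N.
Proof. by rewrite cardsX cards1 cardsT card_prod !card_Zmod ?p0 // muln1. Qed.

Lemma e0_neq1 : (Zp1 : Zmod p) != 1.
Proof.
apply/eqP => e; have := order_Zmod1 p0; rewrite e order1 => p1.
by move: pp; rewrite -p1.
Qed.

Definition ee : HH := ((Zp1, 1), 1).

Lemma ee_Eset : ee \in Eset.
Proof. by rewrite in_setX inE /= inE. Qed.

Lemma ee_neq1 : ee != 1.
Proof.
apply/eqP => e; have : ee.1.1 = 1 by rewrite e.
by move/eqP; rewrite (negbTE e0_neq1).
Qed.

Lemma order_ee : #[ee] = p.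
Proof. exact: nt_prime_order pp (Eset_exp ee_Eset) ee_neq1. Qed.

Lemma HT1 (v w : HH) : Nb v = Nb w -> w \in <[v]> -> <[w]> = <[v]>.
Proof.
move=> e wv; apply/eqP/negPn/negP => wnv.
have allc : forall t, t \in <[v]> -> cmp w t.
  by move=> t tv; rewrite -inNb -e inNb /cmp tv.
case: (eqVneq w 1) => [w1 | w1].
  have v1 : v != 1 by apply: contraNneq wnv => ->; rewrite w1.
  have NbvT : Nb v = setT by rewrite e w1 Nb1.
  have nsub : ~~ (Eset \subset <[v]>).
    apply/negP => sub.
    have cyc : cyclic (Eset :&: <[v]>) by apply: cyclicS (subsetIr _ _) (cycle_cyclic v).
    case/cyclicP: cyc => c ec.
    have cE : c \in Eset by have := cycle_id c; rewrite -ec => /setIP[].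
    have : #|Eset| <= p.
      rewrite -(setIidPl sub) ec -orderE; apply: dvdn_leq p0 _.
      by rewrite order_dvdn Eset_exp.
    rewrite card_Eset leqNgt => /negP[]; by rewrite ltn_Pmull ?prime_gt1 ?p0.
  case/subsetPn: nsub => u uE unv.
  have u1 : u != 1 by apply: contraNneq unv => ->; apply: group1.
  have ou : #[u] = p by apply: nt_prime_order => //; apply: Eset_exp.
  have : u \in Nb v by rewrite NbvT inE.
  rewrite inNb /cmp (negbTE unv) /= => vu.
  have ov : #[v] = p.
    have : (#[v] %| p)%N by have := order_dvdG vu; rewrite -orderE ou.
    have nv1 : #[v] != 1%N by rewrite order_eq1.
    by move=> vp; apply/(prime_nt_dvdP pp nv1).
  have evu : <[v]> = <[u]>.
    by apply/eqP; rewrite eqEcard cycle_subG vu /= -!orderE ou ov.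
  by case/negP: unv; rewrite evu cycle_id.
have [q qp [r r1 ovq]] := pp_lemma wv w1 wnv allc.
have cvp : coprime #[v] p.
  rewrite ovq coprime_pexpl ?(ltnW r1) // prime_coprime //.
  rewrite dvdn_prime2 //; apply/negP => /eqP qe.
  have : (p ^ 2 %| p * n)%N.
    apply: dvdn_trans _ (order_dvd_HH v); rewrite ovq -qe.
    exact: dvdn_exp2l.
  rewrite expnS expn1 dvdn_pmul2l ?p0 // => pn.
  have := cnp; rewrite coprime_sym prime_coprime // pn //.
have cwp : coprime #[w] p by apply: coprime_dvdl cvp; apply: order_dvdG.
set u := w * ee.
have cyu : <[u]> = <[w]> * <[ee]>.
  by apply: cycleM; [apply: comm_HH | rewrite order_ee].
have wu : w \in <[u]> by rewrite cyu; apply/mulsgP; exists w 1; rewrite ?cycle_id ?group1 ?mulg1.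
have : u \in Nb v by rewrite e inNb /cmp wu orbT.
rewrite inNb /cmp; case/orP => [uv | vu].
  have eev : ee \in <[v]>.
    have -> : ee = w^-1 * u by rewrite /u mulKg.
    by rewrite groupM ?groupV.
  have := order_dvdG eev; rewrite order_ee => pv.
  have := cvp; rewrite coprime_sym prime_coprime // pv //.
have : (#[v] %| #[w] * #[ee])%N.
  rewrite -TI_cardMg -?cyu; first exact: order_dvdG.
  by apply: coprime_TIg; rewrite -!orderE order_ee.
rewrite order_ee Gauss_dvdl // => vw.
have wv' : (#[w] %| #[v])%N by apply: order_dvdG.
case/negP: wnv; rewrite eqEcard cycle_subG wv /=.
by rewrite -!orderE (dvdn_leq (order_gt0 _) vw).
Qed.

Lemma HT (u v : HH) : Nb u = Nb v -> <[u]> = <[v]>.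
Proof.
move=> e; have : v \in Nb u by rewrite e inNb cmpxx.
rewrite inNb /cmp; case/orP => [vu | uv].
  by rewrite (HT1 e vu).
by rewrite (HT1 (esym e) uv).
Qed.

Lemma HNb (y : HH) : #[y] = (p * n)%N -> Nb y = <[y]>.
Proof.
move=> oy; apply/setP => u; rewrite inNb /cmp; apply/idP/idP; last by move->.
case/orP => // yu.
have : #[u] = #[y].
  apply/eqP; rewrite eqn_leq (dvdn_leq (order_gt0 _) (order_dvdG yu)) andbT.
  by rewrite oy (dvdn_leq _ (order_dvd_HH u)) // muln_gt0 p0.
move=> ou; have : <[y]> = <[u]>.
  by apply/eqP; rewrite eqEcard cycle_subG yu /= -!orderE ou.
by move->; apply: cycle_id.
Qed.

Definition yy (e : E0) : HH := (e, Zp1).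

Lemma cyc_e1 (e : E0) : <[((e, 1) : HH)]> = setX <[e]> 1.
Proof. by rewrite -morphim_pairg1 morphim_cycle ?inE. Qed.

Lemma cyc_1g : <[((1, Zp1) : HH)]> = setX 1 [set: Zmod n].
Proof. by rewrite -cycle_Zmod1 -morphim_pair1g morphim_cycle ?inE. Qed.

Lemma cycle_yy e : e != 1 -> <[yy e]> = setX <[e]> [set: Zmod n].
Proof.
move=> e1.
have -> : yy e = (e, 1) * (1, Zp1) by rewrite mulpE /= mulg1 mul1g.
rewrite cycleM; first by rewrite cyc_e1 cyc_1g setX_prod.
  exact: comm_HH.
rewrite /order cyc_e1 cyc_1g !cardsX cards1 cardsT card_Zmod // -orderE.
by rewrite cards1 order_E0 // muln1 mul1n coprime_sym.
Qed.

Lemma order_yy e : e != 1 -> #[yy e] = (p * n)%N.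
Proof.
by move=> e1; rewrite /order cycle_yy // cardsX cardsT card_Zmod // -orderE order_E0.
Qed.

Definition e1 : E0 := (Zp1, 1).
Definition e2 : E0 := (1, Zp1).

Lemma e1_neq1 : e1 != 1.
Proof. apply/eqP => e; have : e1.1 = 1 by rewrite e.
by move/eqP; rewrite (negbTE e0_neq1). Qed.

Lemma e2_neq1 : e2 != 1.
Proof. apply/eqP => e; have : e2.2 = 1 by rewrite e.
by move/eqP; rewrite (negbTE e0_neq1). Qed.

Lemma yy_cap : <[yy e1]> :&: <[yy e2]> = setX 1 [set: Zmod n].
Proof.
rewrite !cycle_yy ?e1_neq1 ?e2_neq1 //.
have c1 : <[e1]> = setX <[(Zp1 : Zmod p)]> 1 by rewrite -morphim_pairg1 morphim_cycle ?inE.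
have c2 : <[e2]> = setX 1 <[(Zp1 : Zmod p)]> by rewrite -morphim_pair1g morphim_cycle ?inE.
apply/setP => [[a c]]; rewrite !inE c1 c2 /=.
case: a => a1 a2; rewrite !in_setX !inE /= !andbT.
apply/idP/idP => [/andP[/andP[_ /eqP ->] /andP[/eqP -> _]] // | /eqP [-> ->]].
by rewrite !group1.
Qed.

Lemma C_sub e : e != 1 -> setX 1 [set: Zmod n] \subset <[yy e]>.
Proof. by move=> e1'; rewrite cycle_yy // setXS ?sub1G. Qed.

Lemma card_C : #|setX (1 : {set E0}) [set: Zmod n]| = n.
Proof. by rewrite cardsX cards1 cardsT card_Zmod // mul1n. Qed.

Lemma cover (u : HH) : exists2 e, e != 1 & u \in <[yy e]>.
Proof.
case: u => [e c]; case: (eqVneq e 1) => [-> | ne1].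
  by exists e1; rewrite ?e1_neq1 // cycle_yy ?e1_neq1 // in_setX group1 inE.
by exists e; rewrite // cycle_yy // in_setX cycle_id inE.
Qed.

Lemma card_HH : #|HH| = (p ^ 2 * n)%N.
Proof. by rewrite !card_prod !card_Zmod ?p0. Qed.

End HSide.


Lemma GT (gT : finGroupType) p n (K : {group gT}) :
  prime p -> 0 < n -> coprime n p -> #|K| = n -> #|gT| = (p ^ 2 * n)%N ->
  (forall g : gT, exists x, [/\ g \in <[x]>, K \subset <[x]> & #[x] = (p * n)%N]) ->
  [set: gT] \isog [set: ZppZn p n].
Proof.
move=> pp n0 cnp cK cG hcov.
have p0 : 0 < p by apply: prime_gt0.
have [x1 [_ Kx1 _]] := hcov 1.
have cycK : cyclic K by apply: cyclicS Kx1 (cycle_cyclic x1).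
have Kcent : K \subset 'C([set: gT]).
  apply/centsP => k kK g _; have [x [gx Kx _]] := hcov g.
  by apply: (centsP (cycle_abelian x)) => //; apply: (subsetP Kx).
have gp : forall g : gT, g ^+ p \in K.
  move=> g; have [x [gx Kx ox]] := hcov g.
  have gpx : <[g ^+ p]> \subset <[x]> by rewrite cycle_subG groupX.
  rewrite -cycle_subG -(cardSg_cyclic (cycle_cyclic x)) // cK.
  rewrite order_dvdn -expgM.
  by apply/eqP/eqP; rewrite -order_dvdn -ox; apply: order_dvdG.
have [P sylP] := Sylow_exists p [set: gT].
have cP : #|P| = (p ^ 2)%N.
  rewrite (card_Hall sylP) cardsT cG partnM ?expn_gt0 ?p0 //.
  rewrite part_pnat_id ?pnatX ?pnat_id // part_p'nat ?muln1 //.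
  by rewrite p'natE // -prime_coprime // coprime_sym.
have TI : P :&: K = 1.
  by apply: coprime_TIg; rewrite cP cK coprime_pexpl // coprime_sym.
have Pab : abelian P by apply: card_p2group_abelian pp cP.
have abelP : p.-abelem P.
  apply/(abelemP pp); split=> // g gP.
  by apply/set1gP; rewrite -TI inE groupX ?gp.
have PK : P * K = [set: gT].
  by apply/eqP; rewrite eqEcard subsetT /= cardsT cG TI_cardMg // cP cK.
have dp : P \x K = [set: gT].
  have cKP : K \subset 'C(P) by apply: subset_trans Kcent (centS (subsetT _)).
  by rewrite dprodE.
pose E0 := [set: Zmod p * Zmod p].
have dpH : setX E0 1 \x setX 1 [set: Zmod n] = [set: ZppZn p n].
  rewrite setX_dprod; apply/setP => [[u v]]; by rewrite !inE.
apply: isog_dprod dp dpH _ _.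
  rewrite (isog_abelem_card _ abelP) card_Eset // cP expnS expn1 eqxx andbT.
  apply/(abelemP pp); split; last by move=> u; apply: Eset_exp.
  by apply/centsP => u _ v _; apply: comm_HH.
rewrite (isog_cyclic_card _ cycK) card_C // cK eqxx andbT.
by have := cycle_cyclic ((1, Zp1) : ZppZn p n); rewrite cyc_1g.
Qed.


Theorem corollary7 (gT : finGroupType) (p n : nat) :
  prime p -> 0 < n -> coprime n p ->
  (pow_graph_iso gT (ZppZn p n) <->
   ([set: gT] \isog [set: ZppZn p n])%g).
Proof.
move=> pp n0 cnp; have p0 := prime_gt0 pp; have p1 := prime_gt1 pp.
split.
  case=> f [fbij fadj]; case: fbij => g fg gf.
  have fcmp : forall x y, cmp (f x) (f y) = cmp x y.
    move=> x y; case: (eqVneq x y) => [-> | xy]; first by rewrite !cmpxx.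
    have := fadj x y; rewrite /pow_adj xy (inj_eq (can_inj fg)) xy /=.
    by rewrite /cmp.
  have hcmp : forall u v, cmp (g u) (g v) = cmp u v.
    by move=> u v; rewrite -fcmp !gf.
  have key : forall e : Zmod p * Zmod p, e != 1 ->
      exists x, g @: <[yy n e]> = <[x]>.
    move=> e e1'; apply: (@gsl _ _ g f gf fg hcmp (yy n e) p n).
    - by apply: HNb => //; apply: order_yy.
    - rewrite -orderE order_yy // card_HH // ltn_pmul2r // expnS expn1.
      by rewrite ltn_Pmull.
    case: (ltngtP n 1) => [n_lt1 | n_gt1 | n_eq1].
    - by move: n0; rewrite leqNgt n_lt1.
    - right; split=> //; first exact: HT.
        by rewrite order_yy.
      by rewrite coprime_sym.
    left => u uy.
    have oy : #[yy n e] = p by rewrite order_yy // n_eq1 muln1.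
    case: (eqVneq u 1) => [-> | u1]; [by left | right].
    have ou : #[u] = p.
      have nu1 : #[u] != 1%N by rewrite order_eq1.
      by apply/(prime_nt_dvdP pp nu1); have := order_dvdG uy; rewrite -orderE oy.
    by apply/eqP; rewrite eqEcard cycle_subG uy /= -!orderE ou oy.
  have [x1 ex1] := key _ (e1_neq1 pp).
  have [x2 ex2] := key _ (e2_neq1 pp).
  have ginj : injective g by apply: can_inj gf.
  apply: (@GT _ p n (<[x1]> :&: <[x2]>)%G) => //.
  - rewrite /= -ex1 -ex2 -imsetI; last by move=> ? ? _ _; apply: ginj.
    by rewrite yy_cap // card_imset // card_C.
  - by rewrite (card_gT gf fg) card_HH.
  move=> g0; have [e e1' ue] := cover pp n0 cnp (f g0).
  have [x ex] := key e e1'.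
  exists x; split.
  - by rewrite -ex -[g0]fg imset_f.
  - rewrite /= -ex1 -ex2 -imsetI; last by move=> ? ? _ _; apply: ginj.
    by rewrite -ex yy_cap // imsetS // C_sub.
  by rewrite /order -ex card_imset // -orderE order_yy.
case/isogP => phi injphi imphi.
have phiinj : injective phi.
  by move=> x y; apply: (injmP injphi); rewrite inE.
exists phi; split.
  apply: inj_card_bij phiinj _.
  by rewrite -!cardsT -imphi card_injm.
have memc : forall x y, (phi y \in <[phi x]>) = (y \in <[x]>).
  move=> x y; rewrite -morphim_cycle ?inE //.
  by rewrite -{2}(injmK injphi (subsetT <[x]>)) !inE.
by move=> x y; rewrite /pow_adj (inj_eq phiinj) !memc.
Qed.
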